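(* If $\delta=x^{\mathbf d}f(\theta)$ is a homogeneous differential operator on $R$ of degree $\mathbf d$ with $-\mathbf d$ in the interior of $\sigma^\vee$, then $\delta$ fixes at most one nonzero monomial ideal of $R$.
   Context: Let $\sigma\subseteq\mathbb R^d$ be a full-dimensional, strongly convex rational polyhedral cone, $S=\sigma^\vee\cap\mathbb Z^d$, $R=\mathbb C[S]$ with monomial basis $x^{\mathbf a}$, $\mathbf a\in S$. Let $h_1,\dots,h_n$ be the primitive support functions of the facets of $\sigma^\vee$. $(g,m)!=\prod_{j=0}^m(g-j)$ for $m\ge0$, $=1$ for $m<0$; $H_{\mathbf d}=\prod_i(h_i,h_i(-\mathbf d)-1)!$. For $f\in\mathbb C[t_1,\dots,t_d]$ divisible by $H_{\mathbf d}$, $\delta=x^{\mathbf d}f(\theta)$ is the $\mathbb C$-linear map $R\to R$ with $\delta(x^{\mathbf a})=f(\mathbf a)x^{\mathbf a+\mathbf d}$. An ideal $I$ is $\delta$-fixed if $\delta(I)=I$. *)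

(* Defs.v *)
From HB Require Import structures.
From mathcomp Require Import all_boot all_order all_algebra.
From mathcomp Require Import mpoly.
Set Implicit Arguments. Unset Strict Implicit. Unset Printing Implicit Defensive.
Import Order.TTheory GRing.Theory Num.Theory.
Local Open Scope ring_scope.

(** The lattice Z^n is ['rV[int]_n]; a linear form on Z^n (e.g. a support
    function h_i) is represented by its integer coefficient vector, acting by
    the dot product. *)
Definition zdot (n : nat) (h a : 'rV[int]_n) : int := \sum_(j < n) h 0 j * a 0 j.

Definition qdot (n : nat) (h : 'rV[int]_n) (u : 'rV[rat]_n) : rat :=
  \sum_(j < n) (h 0 j)%:~R * u 0 j.

Definition primitive (n : nat) (v : 'rV[int]_n) : Prop :=
  v != 0 /\ forall (k : int) (w : 'rV[int]_n), v = k *: w -> k = 1 \/ k = -1.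

(** [facet_data h]: h_1..h_k are exactly the primitive support functions of the
    facets of the cone sigma^vee = { u | h_i(u) >= 0 for all i } (the dual of
    sigma = cone(h_1,..,h_k)), where sigma is a full-dimensional strongly convex
    rational polyhedral cone.  Concretely:
    - each h_i is primitive;
    - sigma^vee is full-dimensional (<=> sigma strongly convex);
    - sigma^vee is strongly convex (<=> sigma full-dimensional);
    - each h_i defines a facet of sigma^vee: the hyperplane h_i = 0 meets
      sigma^vee in a set of codimension one, i.e. it contains a point of
      sigma^vee at which all other h_j are strictly positive (this also makes
      the h_i pairwise distinct, i.e. the list of facets is irredundant).
    (Real points may be replaced by rational points since all data are
    rational.) *)
Definition facet_data (n k : nat) (h : 'I_k -> 'rV[int]_n) : Prop :=
  [/\ forall i, primitive (h i),
      exists u : 'rV[rat]_n, forall i, 0 < qdot (h i) u,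
      forall u : 'rV[rat]_n, (forall i, qdot (h i) u = 0) -> u = 0 &
      forall i, exists u : 'rV[rat]_n,
        qdot (h i) u = 0 /\ forall j, j != i -> 0 < qdot (h j) u].

Definition inS (n k : nat) (h : 'I_k -> 'rV[int]_n) (a : 'rV[int]_n) : Prop :=
  forall i, 0 <= zdot (h i) a.

Definition in_interior_dual (n k : nat) (h : 'I_k -> 'rV[int]_n)
  (a : 'rV[int]_n) : Prop :=
  forall i, 0 < zdot (h i) a.

(** ---- The semigroup ring R = C[S] ----
    An element of R is represented by its coefficient function
    Z^n -> C, which must have finite support contained in S; the monomial
    x^a is the indicator function of a. *)
Section Ring.
Variables (C : numClosedFieldType) (n k : nat) (h : 'I_k -> 'rV[int]_n).

Definition elt := 'rV[int]_n -> C.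

Definition inR (p : elt) : Prop :=
  (forall a, p a != 0 -> inS h a) /\
  exists s : seq 'rV[int]_n, forall a, p a != 0 -> a \in s.

Definition monomial (a : 'rV[int]_n) : elt := fun b => if b == a then 1 else 0.

Definition eadd (p q : elt) : elt := fun a => p a + q a.
Definition escale (c : C) (p : elt) : elt := fun a => c * p a.
Definition emulmon (b : 'rV[int]_n) (p : elt) : elt := fun a => p (a - b).

(** An ideal of R.  Since R is spanned over C by the monomials x^b (b in S),
    closure under multiplication by R is the same as closure under C-scaling
    and under multiplication by monomials. *)
Definition ideal (I : elt -> Prop) : Prop :=
  [/\ forall p, I p -> inR p,
      I (fun _ => 0),
      forall p q, I p -> I q -> I (eadd p q),
      forall c p, I p -> I (escale c p) &
      forall b p, inS h b -> I p -> I (emulmon b p)].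

Definition monomial_ideal (I : elt -> Prop) : Prop :=
  ideal I /\
  forall p, I p -> exists s : seq (C * 'rV[int]_n),
     (forall cb, cb \in s -> I (monomial cb.2)) /\
     p = (fun a => \sum_(cb <- s) cb.1 * monomial cb.2 a).

Definition nonzero_ideal (I : elt -> Prop) : Prop :=
  exists p, I p /\ p <> (fun _ => 0).

Definition linpoly (v : 'rV[int]_n) : {mpoly C[n]} :=
  \sum_(j < n) (v 0 j)%:~R *: 'X_j.

Definition ffact (g : {mpoly C[n]}) (m : int) : {mpoly C[n]} :=
  match m with
  | Posz m' => \prod_(j < m'.+1) (g - (j%:R)%:MP)
  | Negz _ => 1
  end.

Definition Hd (d : 'rV[int]_n) : {mpoly C[n]} :=
  \prod_(i < k) ffact (linpoly (h i)) (zdot (h i) (- d) - 1).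

Definition mdivides (g f : {mpoly C[n]}) : Prop := exists q, f = g * q.

Definition evalZ (f : {mpoly C[n]}) (a : 'rV[int]_n) : C :=
  f.@[fun j => (a 0 j)%:~R].

(** delta = x^d f(theta): delta(x^a) = f(a) x^(a+d), extended linearly;
    the coefficient of x^b in delta(p) is f(b - d) * p(b - d). *)
Definition diffop (d : 'rV[int]_n) (f : {mpoly C[n]}) (p : elt) : elt :=
  fun b => evalZ f (b - d) * p (b - d).

Definition delta_fixed (d : 'rV[int]_n) (f : {mpoly C[n]}) (I : elt -> Prop)
  : Prop :=
  forall q, I q <-> exists p, I p /\ q = diffop d f p.

End Ring.

(* Main.v *)
Require Import Defs.
From HB Require Import structures.
From mathcomp Require Import all_boot all_order all_algebra.
From mathcomp Require Import mpoly.
From Stdlib Require Import FunctionalExtensionality.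
From mathcomp Require Import zify.
Import Order.TTheory GRing.Theory Num.Theory.
Local Open Scope ring_scope.
Set Implicit Arguments. Unset Strict Implicit.

Lemma zdotD (n : nat) (v a b : 'rV[int]_n) : zdot v (a + b) = zdot v a + zdot v b.
Proof. rewrite /zdot -big_split /=; apply: eq_bigr => j _; by rewrite [(a+b) _ _]mxE mulrDr. Qed.

Lemma zdotN (n : nat) (v a : 'rV[int]_n) : zdot v (- a) = - zdot v a.
Proof. rewrite /zdot -sumrN; apply: eq_bigr => j _; by rewrite [(- a) _ _]mxE mulrN. Qed.

Lemma zdotMn (n : nat) (v a : 'rV[int]_n) m : zdot v (a *+ m) = zdot v a *+ m.
Proof. rewrite /zdot -sumrMnl; apply: eq_bigr => j _; by rewrite mulmxnE mulrnAr. Qed.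

Lemma inS_add (n k : nat) (h : 'I_k -> 'rV[int]_n) a b :
  inS h a -> inS h b -> inS h (a + b).
Proof. by move=> A B i; rewrite zdotD addr_ge0. Qed.

Lemma mon_inS (C : numClosedFieldType) (n k : nat) (h : 'I_k -> 'rV[int]_n)
  (I : elt C n -> Prop) b :
  ideal h I -> I (monomial C b) -> inS h b.
Proof.
case=> HR _ _ _ _ Ib; case: (HR _ Ib) => H _; apply: H.
by rewrite /monomial eqxx oner_neq0.
Qed.

Lemma mon_shift (C : numClosedFieldType) (n k : nat) (h : 'I_k -> 'rV[int]_n)
  (I : elt C n -> Prop) e c :
  ideal h I -> I (monomial C e) -> inS h c -> I (monomial C (e + c)).
Proof.
case=> _ _ _ _ HM Ie Sc.
have -> : monomial C (e + c) = emulmon c (monomial C e).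
  apply: functional_extensionality => a.
  by rewrite /emulmon /monomial subr_eq.
exact: HM.
Qed.

Lemma mon_down (C : numClosedFieldType) (n k : nat) (h : 'I_k -> 'rV[int]_n)
  d f (I : elt C n -> Prop) b :
  ideal h I -> delta_fixed d f I -> in_interior_dual h (- d) ->
  I (monomial C b) -> evalZ f (b - d) != 0 /\ I (monomial C (b - d)).
Proof.
move=> Hid Hfix Hint Ib; split.
  case: ((Hfix _).1 Ib) => p [_ Hp].
  have := congr1 (fun g => g b) Hp; rewrite /diffop /monomial eqxx => E.
  apply/eqP => E0; move: E; rewrite E0 mul0r => /eqP; by rewrite oner_eq0.
apply: (@mon_shift _ _ _ h) => //.
by move=> i; apply: ltW.
Qed.

Lemma mon_up (C : numClosedFieldType) (n k : nat) (h : 'I_k -> 'rV[int]_n)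
  d f (I : elt C n -> Prop) a :
  ideal h I -> delta_fixed d f I ->
  I (monomial C a) -> evalZ f a != 0 -> I (monomial C (a + d)).
Proof.
move=> Hid Hfix Ia fa.
have Id : I (diffop d f (monomial C a)) by apply/(Hfix _); exists (monomial C a).
case: Hid => _ _ _ HS _.
have -> : monomial C (a + d) = escale (evalZ f a)^-1 (diffop d f (monomial C a)).
  apply: functional_extensionality => b.
  rewrite /escale /diffop /monomial subr_eq.
  case: eqP => [->|_]; last by rewrite !mulr0.
  by rewrite addrK mulr1 mulVf.
exact: HS.
Qed.

Lemma far (n k : nat) (h : 'I_k -> 'rV[int]_n) d b e :
  in_interior_dual h (- d) -> exists m : nat, inS h (b - d *+ m - e).
Proof.
move=> Hint.
exists (\sum_(i < k) `|zdot (h i) (b - e)|%N)%N => i.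
have -> : b - d *+ (\sum_(i < k) `|zdot (h i) (b - e)|%N)%N - e
   = (b - e) + (- d) *+ (\sum_(i < k) `|zdot (h i) (b - e)|%N)%N.
  by rewrite mulNrn addrAC.
rewrite zdotD zdotMn.
set m := (\sum_(i < k) _)%N.
have hm : (`|zdot (h i) (b - e)|%N <= m)%N.
  by rewrite /m (bigD1 i) //= leq_addr.
have h1 : 1 <= zdot (h i) (- d) by have := Hint i.
have A : - zdot (h i) (b - e) <= m%:Z.
  apply: le_trans (ler_norm _) _; rewrite normrN.
  by rewrite -abszE lez_nat.
rewrite -mulr_natr.
move: A h1; set x := zdot (h i) (b - e); set y := zdot (h i) (- d).
move=> A h1; have : 0 <= (y - 1) * m%:Z by apply: mulr_ge0; rewrite ?subr_ge0.
move: A; lia.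
Qed.

Lemma char_mon (C : numClosedFieldType) (n k : nat) (h : 'I_k -> 'rV[int]_n)
  d f (I : elt C n -> Prop) e b :
  ideal h I -> delta_fixed d f I -> in_interior_dual h (- d) ->
  I (monomial C e) ->
  (I (monomial C b) <-> inS h b /\ forall j : nat, evalZ f (b - d *+ j.+1) != 0).
Proof.
move=> Hid Hfix Hint Ie; split.
  move=> Ib; split; first exact: (mon_inS Hid Ib).
  move=> j; elim: j b Ib => [|j IH] b Ib.
    by rewrite mulr1n; case: (mon_down Hid Hfix Hint Ib).
  case: (mon_down Hid Hfix Hint Ib) => _ Ib'.
  by rewrite mulrS opprD addrA; apply: IH.
case=> Sb Hf.
have [m Hm] := far b e Hint.
have Im : I (monomial C (b - d *+ m)).
  have -> : b - d *+ m = e + (b - d *+ m - e) by rewrite [e + _]addrC subrK.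
  exact: (@mon_shift _ _ _ h).
elim: m b Sb Hf Im {Hm} => [|m IH] b Sb Hf Im.
  by rewrite mulr0n subr0 in Im.
have Ib' : I (monomial C (b - d)).
  apply: IH.
  - by apply: inS_add => // i; apply: ltW.
  - by move=> j; rewrite -addrA -opprD -mulrS; apply: Hf.
  - by rewrite -addrA -opprD -mulrS.
have := mon_up Hid Hfix Ib'; rewrite subrK; apply.
by have := Hf 0%N; rewrite mulr1n.
Qed.

Lemma span_sub (C : numClosedFieldType) (n k : nat) (h : 'I_k -> 'rV[int]_n)
  (I J : elt C n -> Prop) p :
  monomial_ideal h I -> ideal h J ->
  (forall e, I (monomial C e) -> J (monomial C e)) -> I p -> J p.
Proof.
case=> _ HI [_ J0 JD JS _] HIJ Ip.
case: (HI _ Ip) => s [Hs ->] {Ip}.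
elim: s Hs => [|cb s IH] Hs.
  have -> : (fun a : 'rV[int]_n => \sum_(cb <- [::] : seq (C * 'rV[int]_n)) cb.1 * monomial C cb.2 a) = (fun _ => 0 : C).
    by apply: functional_extensionality => a; rewrite big_nil.
  exact: J0.
have -> : (fun a : 'rV[int]_n => \sum_(cb0 <- cb :: s) cb0.1 * monomial C cb0.2 a)
   = eadd (escale cb.1 (monomial C cb.2))
          (fun a => \sum_(cb0 <- s) cb0.1 * monomial C cb0.2 a).
  by apply: functional_extensionality => a; rewrite big_cons.
apply: JD; first by apply: JS; apply: HIJ; apply: Hs; exact: mem_head.
by apply: IH => cb0 H; apply: Hs; rewrite in_cons H orbT.
Qed.

Lemma nonempty_mon (C : numClosedFieldType) (n k : nat) (h : 'I_k -> 'rV[int]_n)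
  (I : elt C n -> Prop) :
  monomial_ideal h I -> nonzero_ideal I -> exists e, I (monomial C e).
Proof.
case=> _ HI [p [Ip Hp]].
case: (HI _ Ip) => s [Hs Ep].
case: s Hs Ep => [|cb s] Hs Ep.
  exfalso; apply: Hp; rewrite Ep; apply: functional_extensionality => a.
  by rewrite big_nil.
by exists cb.2; apply: Hs; exact: mem_head.
Qed.

Unset Implicit Arguments.

Theorem mainTheorem11 (C : numClosedFieldType) (n k : nat)
  (h : 'I_k -> 'rV[int]_n) (d : 'rV[int]_n) (f : {mpoly C[n]}) :
  facet_data h ->
  mdivides (Hd C h d) f ->
  in_interior_dual h (- d) ->
  forall I J : elt C n -> Prop,
    monomial_ideal h I -> nonzero_ideal I -> delta_fixed d f I ->
    monomial_ideal h J -> nonzero_ideal J -> delta_fixed d f J ->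
    forall p, I p <-> J p.
Proof.
move=> _ _ Hint I J MI NI FI MJ NJ FJ.
have [eI Ie] := nonempty_mon MI NI.
have [eJ Je] := nonempty_mon MJ NJ.
have key : forall b, I (monomial C b) <-> J (monomial C b).
  move=> b; rewrite (char_mon b MI.1 FI Hint Ie) (char_mon b MJ.1 FJ Hint Je).
  by [].
move=> p; split.
  by apply: (span_sub MI MJ.1) => e /key.
by apply: (span_sub MJ MI.1) => e /key.
Qed.
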